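(* Let $a^*$ and $b^*$ be the right and left endpoints (possibly infinite) of the interval $\mathbf{R}_j$. Then: - $a^*\notin\mathbf{R}_j$ if and only if $m_{j,0}((c,a^* ))=\infty$ for every $c\in(b^*,a^* )$; - $b^*\notin\mathbf{R}_j$ if and only if $m_{j,0}((b^*,c))=\infty$ for every $c\in(b^*,a^* )$.
   Context: Let $m$ be Lebesgue measure. Let $G\subset\mathbf{R}$ be open such that $m(G\cap(a,b))>0$ for every nonempty bounded open interval $(a,b)$, and let $F=\mathbf{R}\setminus G$ satisfy $m(F)>0$ and have no isolated points. Assume $m(G)=\infty$. Write $G=\bigcup_{n\ge1}I_n$, where $I_n=(a_n,b_n)$ are its disjoint components, and let $H=\{a_n,b_n:n\ge1\}\setminus\{\pm\infty\}$. Fix $z\in F\setminus H$ and define $j(x)=\int_z^x1_F(t)\,dt$ for $x\in\mathbf{R}$. Then $j$ is nondecreasing, $\mathbf{R}_j:=j(\mathbf{R})$ is an interval, and $j$ is constant exactly on each closure $\bar I_n$; write $p_n^*=j(\bar I_n)$. Let $m_j=m\circ j^{-1}$ be the image measure on $\mathbf{R}_j$, $\mathbf{R}_{j,0}$ the interior of $\mathbf{R}_j$, and $m_{j,0}=m_j|_{\mathbf{R}_{j,0}}$. *)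

(* Defs.v *)
From Stdlib Require Import Reals.
Open Scope R_scope.

Inductive ereal : Type := NInf | Fin (r : R) | PInf.

Definition elt (x y : ereal) : Prop :=
  match x, y with
  | NInf, NInf => False
  | NInf, _ => True
  | Fin a, Fin b => a < b
  | Fin _, PInf => True
  | Fin _, NInf => False
  | PInf, _ => False
  end.

Definition ele (x y : ereal) : Prop := elt x y \/ x = y.

(* Lebesgue outer measure, via countable covers by open intervals.
   outer_le A r  <->  m*(A) <= r. *)
Definition outer_le (A : R -> Prop) (r : R) : Prop :=
  exists a b : nat -> R,
    (forall n, a n <= b n) /\
    (forall x, A x -> exists n, a n < x /\ x < b n) /\
    (forall N, sum_f_R0 (fun n => b n - a n) N <= r).

Definition meas_eq (A : R -> Prop) (r : R) : Prop :=
  (forall eps, 0 < eps -> outer_le A (r + eps)) /\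
  (forall r', outer_le A r' -> r <= r').

Definition meas_infinite (A : R -> Prop) : Prop :=
  ~ exists r, outer_le A r.

Definition meas_pos (A : R -> Prop) : Prop :=
  ~ (forall eps, 0 < eps -> outer_le A eps).

Definition is_open (G : R -> Prop) : Prop :=
  forall x, G x -> exists eps, 0 < eps /\ forall y, Rabs (y - x) < eps -> G y.

Definition no_isolated_points (F : R -> Prop) : Prop :=
  forall x, F x -> forall eps, 0 < eps ->
    exists y, F y /\ y <> x /\ Rabs (y - x) < eps.

Definition eint (a b : ereal) (x : R) : Prop := elt a (Fin x) /\ elt (Fin x) b.

Definition component (G : R -> Prop) (a b : ereal) : Prop :=
  elt a b /\ (forall x, eint a b x -> G x) /\
  (forall r, a = Fin r -> ~ G r) /\ (forall r, b = Fin r -> ~ G r).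

Definition endpoints (G : R -> Prop) (h : R) : Prop :=
  exists a b, component G a b /\ (a = Fin h \/ b = Fin h).

(* j(x) = \int_z^x 1_F(t) dt  (oriented Lebesgue integral of the indicator) *)
Definition is_j (F : R -> Prop) (z : R) (j : R -> R) : Prop :=
  forall x,
    (z <= x -> meas_eq (fun t => F t /\ z <= t /\ t <= x) (j x)) /\
    (x < z -> meas_eq (fun t => F t /\ x <= t /\ t <= z) (- j x)).

Definition is_esup (S : R -> Prop) (e : ereal) : Prop :=
  (forall x, S x -> ele (Fin x) e) /\
  (forall u, (forall x, S x -> ele (Fin x) u) -> ele e u).

Definition is_einf (S : R -> Prop) (e : ereal) : Prop :=
  (forall x, S x -> ele e (Fin x)) /\
  (forall u, (forall x, S x -> ele u (Fin x)) -> ele u e).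

(* Main.v *)
Require Import Defs.
From Stdlib Require Import Reals Lra List Lia Classical ClassicalEpsilon.
Open Scope R_scope.

Lemma nat_above (M : R) : exists N : nat, M <= INR N.
Proof. destruct (INR_archimed 1 M) as [n Hn]; [lra|]. exists n; lra. Qed.

Definition len (p : R * R) := snd p - fst p.
Fixpoint lsum (l : list (R*R)) : R :=
  match l with nil => 0 | p :: l' => len p + lsum l' end.

Lemma lsum_nonneg l : (forall p, In p l -> fst p <= snd p) -> 0 <= lsum l.
Proof.
  induction l as [|p l IH]; simpl; intros H; [lra|].
  assert (fst p <= snd p) by auto. unfold len.
  assert (0 <= lsum l) by (apply IH; auto). lra.
Qed.

Definition peq_dec : forall p q : R*R, {p = q} + {p <> q}.
Proof.
  intros [a b] [c d]. destruct (Req_EM_T a c); destruct (Req_EM_T b d); subst;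
  [left; reflexivity| right; congruence|right; congruence|right;congruence].
Defined.

Lemma lsum_remove l y : (forall p, In p l -> fst p <= snd p) -> In y l ->
  lsum (remove peq_dec y l) + len y <= lsum l.
Proof.
  induction l as [|p l IH]; simpl; intros Hp Hy; [contradiction|].
  destruct (peq_dec y p) as [e|ne].
  - subst p. destruct (in_dec peq_dec y l) as [i|ni].
    + assert (lsum (remove peq_dec y l) + len y <= lsum l) by (apply IH; auto).
      assert (fst y <= snd y) by auto. unfold len in *. lra.
    + rewrite notin_remove by auto.
      assert (0 <= lsum l) by (apply lsum_nonneg; auto). lra.
  - simpl. destruct Hy as [e|i]; [congruence|].
    assert (lsum (remove peq_dec y l) + len y <= lsum l) by (apply IH; auto). lra.
Qed.

Lemma list_cover : forall n l u v, (length l <= n)%nat ->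
  (forall p, In p l -> fst p <= snd p) -> u <= v ->
  (forall x, u <= x <= v -> exists p, In p l /\ fst p < x < snd p) ->
  v - u <= lsum l.
Proof.
  induction n as [|n IH]; intros l u v Hl Hp Huv Hc.
  - destruct l; [|simpl in Hl; lia].
    destruct (Hc v) as [p [[] _]]; lra.
  - destruct (Hc v) as [y [Hy Hvy]]; [lra|].
    assert (Hr := lsum_remove l y Hp Hy).
    destruct (Rle_dec u (fst y)) as [Hu|Hu].
    + assert (fst y - u <= lsum (remove peq_dec y l)).
      { apply IH with (u := u) (v := fst y); auto.
        - assert (length (remove peq_dec y l) < length l)%nat
            by (apply remove_length_lt; auto). lia.
        - intros p Hp'. apply in_remove in Hp'. apply Hp; tauto.
        - intros x Hx. destruct (Hc x) as [p [Hp1 Hp2]]; [lra|].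
          exists p; split; auto. apply in_in_remove; auto.
          intro e; subst p; lra. }
      unfold len in Hr. lra.
    + assert (0 <= lsum (remove peq_dec y l)).
      { apply lsum_nonneg. intros p Hp'. apply in_remove in Hp'. apply Hp; tauto. }
      unfold len in Hr. lra.
Qed.

Lemma list_ub (l : list R) : exists M, forall y, In y l -> y <= M.
Proof.
  induction l as [|a l [M HM]]; [exists 0; intros y []|].
  exists (Rmax a M). intros y [e|i]; [subst; apply Rmax_l|].
  apply Rle_trans with M; auto. apply Rmax_r.
Qed.

Lemma HB (K : R -> Prop) (a b : nat -> R) : compact K ->
  (forall x, K x -> exists n, a n < x < b n) ->
  exists N, forall x, K x -> exists n, (n <= N)%nat /\ a n < x < b n.
Proof.
  intros Hk Hc.
  set (fam := fun x y => exists n, x = INR n /\ a n < y < b n).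
  assert (cf : forall x, (exists y, fam x y) -> (fun x => exists n:nat, x = INR n) x).
  { intros x [y [n [e _]]]. exists n; auto. }
  set (F := mkfamily _ fam cf).
  destruct (Hk F) as [D [Hcov [l Hl]]].
  - split.
    + intros x Kx. destruct (Hc x Kx) as [n Hn]. exists (INR n). exists n; auto.
    + intros x y [n [e [h1 h2]]]. 
      assert (Hd : 0 < Rmin (y - a n) (b n - y)) by (apply Rmin_pos; lra).
      exists (mkposreal _ Hd). intros w Hw. unfold disc in Hw. simpl in Hw.
      exists n. split; auto.
      assert (Rmin (y - a n) (b n - y) <= y - a n) by apply Rmin_l.
      assert (Rmin (y - a n) (b n - y) <= b n - y) by apply Rmin_r.
      apply Rabs_def2 in Hw. lra.
  - destruct (list_ub l) as [M HM]. destruct (nat_above M) as [N HN].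
    exists N. intros x Kx. destruct (Hcov x Kx) as [y [[n [e Hn]] Dy]].
    exists n. split; auto. apply INR_le.
    assert (In y l). { apply Hl. split; auto. exists n; auto. }
    subst y. specialize (HM _ H). lra.
Qed.
Lemma lsum_app l1 l2 : lsum (l1 ++ l2) = lsum l1 + lsum l2.
Proof. induction l1; simpl; lra. Qed.

Lemma lsum_seq (f : nat -> R*R) N :
  lsum (map f (seq 0 (S N))) = sum_f_R0 (fun n => len (f n)) N.
Proof.
  induction N; [simpl; lra|].
  rewrite seq_S, map_app, lsum_app, IHN. simpl. lra.
Qed.

Lemma cover_len (a b : nat -> R) u v : (forall n, a n <= b n) -> u <= v ->
  (forall x, u <= x <= v -> exists n, a n < x < b n) ->
  exists N, v - u <= sum_f_R0 (fun n => b n - a n) N.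
Proof.
  intros Hab Huv Hc.
  destruct (HB (fun x => u <= x <= v) a b (compact_P3 u v) Hc) as [N HN].
  exists N.
  replace (sum_f_R0 (fun n => b n - a n) N) with
      (lsum (map (fun n => (a n, b n)) (seq 0 (S N)))).
  2:{ rewrite lsum_seq. apply sum_eq. intros; unfold len; simpl; lra. }
  apply (list_cover (length (map (fun n => (a n, b n)) (seq 0 (S N))))); auto.
  - intros p Hp. apply in_map_iff in Hp. destruct Hp as [n [e _]]. subst; simpl; auto.
  - intros x Hx. destruct (HN x Hx) as [n [Hn1 Hn2]]. exists (a n, b n). split; auto.
    apply (in_map (fun n => (a n, b n))). apply in_seq. lia.
Qed.

Lemma outer_le_nonneg A r : outer_le A r -> 0 <= r.
Proof.
  intros [a [b [Hab [_ Hs]]]]. specialize (Hs O). simpl in Hs. specialize (Hab O). lra.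
Qed.

Lemma inf_right (A : R -> Prop) x0 : (forall x, x0 <= x -> A x) -> meas_infinite A.
Proof.
  intros HA [r Hr]. assert (0 <= r) by (eapply outer_le_nonneg; eauto).
  destruct Hr as [a [b [Hab [Hc Hs]]]].
  destruct (cover_len a b x0 (x0 + r + 1) Hab) as [N HN]; [lra| |].
  - intros x Hx. apply Hc, HA. lra.
  - specialize (Hs N). lra.
Qed.

Lemma inf_left (A : R -> Prop) x0 : (forall x, x <= x0 -> A x) -> meas_infinite A.
Proof.
  intros HA [r Hr]. assert (0 <= r) by (eapply outer_le_nonneg; eauto).
  destruct Hr as [a [b [Hab [Hc Hs]]]].
  destruct (cover_len a b (x0 - r - 1) x0 Hab) as [N HN]; [lra| |].
  - intros x Hx. apply Hc, HA. lra.
  - specialize (Hs N). lra.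
Qed.

Lemma outer_le_interval (A : R -> Prop) p q : p <= q ->
  (forall x, A x -> p < x < q) -> outer_le A (q - p).
Proof.
  intros Hpq HA.
  exists (fun n => match n with O => p | _ => 0 end).
  exists (fun n => match n with O => q | _ => 0 end).
  split; [intros [|n]; lra|]. split.
  - intros x Ax. exists O. auto.
  - intros N. induction N; simpl; lra.
Qed.

Lemma outer_le_mono (A B : R -> Prop) r : (forall x, A x -> B x) -> outer_le B r -> outer_le A r.
Proof.
  intros H [a [b [Hab [Hc Hs]]]]. exists a, b. repeat split; auto.
Qed.

Lemma meas_eq_nonneg A r : meas_eq A r -> 0 <= r.
Proof.
  intros [H1 _]. apply Rnot_lt_le. intro Hr.
  assert (h := H1 (- r / 2) ltac:(lra)). apply outer_le_nonneg in h. lra.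
Qed.

Lemma meas_eq_mono A B r s : (forall x, A x -> B x) -> meas_eq A r -> meas_eq B s -> r <= s.
Proof.
  intros H [_ HA] [HB _]. apply Rnot_lt_le. intro Hlt.
  assert (h := HB ((r - s)/2) ltac:(lra)).
  assert (h' := HA _ (outer_le_mono A B _ H h)). lra.
Qed.
Fixpoint flat (Lf : nat -> list (R*R)) (m : nat) : list (R*R) :=
  match m with O => Lf O | S m' => flat Lf m' ++ Lf (S m') end.

Definition d0 : R*R := (0,0).

Lemma flat_len Lf : (forall n, Lf n <> nil) -> forall m, (S m <= length (flat Lf m))%nat.
Proof.
  intros H m. induction m; simpl.
  - destruct (Lf O) eqn:E; [elim (H O E)|simpl; lia].
  - rewrite length_app. destruct (Lf (S m)) eqn:E; [elim (H _ E)|simpl; lia].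
Qed.

Lemma flat_prefix Lf m m' : (m <= m')%nat -> exists t, flat Lf m' = flat Lf m ++ t.
Proof.
  intros H. induction H.
  - exists nil. rewrite app_nil_r; auto.
  - destruct IHle as [t Ht]. exists (t ++ Lf (S m0)). simpl. rewrite Ht, app_assoc. auto.
Qed.

Lemma flat_nth Lf i m m' : (i < length (flat Lf m))%nat -> (i < length (flat Lf m'))%nat ->
  nth i (flat Lf m) d0 = nth i (flat Lf m') d0.
Proof.
  intros H1 H2. destruct (Nat.le_ge_cases m m') as [h|h].
  - destruct (flat_prefix Lf m m' h) as [t Ht]. rewrite Ht, app_nth1; auto.
  - destruct (flat_prefix Lf m' m h) as [t Ht]. rewrite Ht, app_nth1; auto.
Qed.

Lemma flat_in Lf n p : In p (Lf n) -> In p (flat Lf n).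
Proof. destruct n; simpl; auto. intros; apply in_or_app; auto. Qed.

Lemma flat_in_inv Lf m p : In p (flat Lf m) -> exists n, In p (Lf n).
Proof.
  induction m; simpl; eauto. intros H. apply in_app_or in H. destruct H; eauto.
Qed.

Lemma lsum_firstn l n : lsum (firstn (S n) l) = lsum (firstn n l) + len (nth n l d0).
Proof.
  revert n; induction l as [|p l IH]; intros n.
  - destruct n; simpl; unfold len, d0; simpl; lra.
  - destruct n; [simpl; lra|].
    change (len p + lsum (firstn (S n) l) = len p + lsum (firstn n l) + len (nth n l d0)).
    rewrite IH. lra.
Qed.

Lemma sum_nth l N : sum_f_R0 (fun m => len (nth m l d0)) N = lsum (firstn (S N) l).
Proof.
  induction N.
  - rewrite (lsum_firstn l 0). simpl. lra.
  - rewrite (lsum_firstn l (S N)), <- IHN. simpl. auto.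
Qed.

Lemma lsum_firstn_le l k : (forall p, In p l -> fst p <= snd p) -> lsum (firstn k l) <= lsum l.
Proof.
  revert k; induction l as [|p l IH]; intros k H; destruct k.
  - simpl; lra.
  - simpl; lra.
  - assert (0 <= lsum (p :: l)) by (apply lsum_nonneg; auto). simpl firstn. change (lsum nil <= lsum (p :: l)). simpl lsum at 1. lra.
  - assert (lsum (firstn k l) <= lsum l) by (apply IH; intros; apply H; simpl; auto).
    change (len p + lsum (firstn k l) <= len p + lsum l). lra.
Qed.

Lemma fin_cover (A : R -> Prop) e : compact A -> outer_le A e ->
  exists L, L <> nil /\ (forall p, In p L -> fst p <= snd p) /\ lsum L <= e /\
    (forall x, A x -> exists p, In p L /\ fst p < x < snd p).
Proof.
  intros Hk [a [b [Hab [Hc Hs]]]].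
  destruct (HB A a b Hk Hc) as [N HN].
  exists (d0 :: map (fun n => (a n, b n)) (seq 0 (S N))).
  split; [discriminate|]. split; [|split].
  - intros p [e'|Hp]; [subst; unfold d0; simpl; lra|].
    apply in_map_iff in Hp. destruct Hp as [n [e' _]]. subst; simpl; auto.
  - change (len d0 + lsum (map (fun n => (a n, b n)) (seq 0 (S N))) <= e).
    rewrite lsum_seq. unfold len, d0; simpl.
    replace (sum_f_R0 (fun n => snd (a n, b n) - fst (a n, b n)) N) with
      (sum_f_R0 (fun n => b n - a n) N) by (apply sum_eq; intros; simpl; auto).
    specialize (Hs N). lra.
  - intros x Hx. destruct (HN x Hx) as [n [Hn1 Hn2]]. exists (a n, b n). split; auto.
    right. apply (in_map (fun n => (a n, b n))). apply in_seq. lia.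
Qed.

Lemma null_union (A : nat -> R -> Prop) : (forall n, compact (A n)) ->
  (forall n eps, 0 < eps -> outer_le (A n) eps) ->
  forall eps, 0 < eps -> outer_le (fun x => exists n, A n x) eps.
Proof.
  intros Hk Hn eps Heps.
  assert (Hex : forall n, exists L, L <> nil /\ (forall p, In p L -> fst p <= snd p) /\
     lsum L <= eps / 2 ^ (S n) /\ (forall x, A n x -> exists p, In p L /\ fst p < x < snd p)).
  { intros n. apply fin_cover; auto. apply Hn.
    apply Rdiv_lt_0_compat; auto. apply pow_lt; lra. }
  set (Lf := fun n => proj1_sig (constructive_indefinite_description _ (Hex n))).
  assert (HL : forall n, Lf n <> nil /\ (forall p, In p (Lf n) -> fst p <= snd p) /\
     lsum (Lf n) <= eps / 2 ^ (S n) /\ (forall x, A n x -> exists p, In p (Lf n) /\ fst p < x < snd p)).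
  { intros n. unfold Lf. destruct (constructive_indefinite_description _ (Hex n)); simpl; auto. }
  clearbody Lf.
  assert (Hne : forall n, Lf n <> nil) by (intros n; apply HL).
  assert (Hfs : forall m p, In p (flat Lf m) -> fst p <= snd p).
  { intros m p Hp. destruct (flat_in_inv Lf m p Hp) as [n Hn']. apply (HL n); auto. }
  assert (Hsum : forall m, lsum (flat Lf m) <= eps - eps / 2 ^ (S m)).
  { induction m; simpl.
    - destruct (HL O) as [_ [_ [h _]]]. simpl in h. lra.
    - rewrite lsum_app. destruct (HL (S m)) as [_ [_ [h _]]].
      assert (E : eps / 2 ^ S (S m) = (eps / 2 ^ S m) / 2).
      { change (2 ^ S (S m)) with (2 * 2 ^ S m). field. apply pow_nonzero; lra. }
      rewrite E in h. simpl in *. lra. }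
  exists (fun m => fst (nth m (flat Lf m) d0)), (fun m => snd (nth m (flat Lf m) d0)).
  split; [|split].
  - intros m. apply (Hfs m). apply nth_In. apply (flat_len Lf Hne m).
  - intros x [n Hx]. destruct (HL n) as [_ [_ [_ Hc]]]. destruct (Hc x Hx) as [p [Hp Hpx]].
    apply (flat_in Lf n) in Hp. destruct (In_nth _ _ d0 Hp) as [i [Hi Hie]].
    exists i. rewrite (flat_nth Lf i i n); [rewrite Hie; auto| |auto].
    apply (flat_len Lf Hne i).
  - intros N.
    replace (sum_f_R0 (fun n => snd (nth n (flat Lf n) d0) - fst (nth n (flat Lf n) d0)) N)
      with (sum_f_R0 (fun m => len (nth m (flat Lf N) d0)) N).
    2:{ apply sum_eq. intros i Hi. unfold len. rewrite (flat_nth Lf i N i); [reflexivity| |apply flat_len; auto].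
        apply Nat.lt_le_trans with (S N); [lia|apply flat_len; auto]. }
    rewrite sum_nth.
    assert (lsum (firstn (S N) (flat Lf N)) <= lsum (flat Lf N)) by (apply lsum_firstn_le; exact (Hfs N)).
    specialize (Hsum N).
    assert (0 < eps / 2 ^ S N) by (apply Rdiv_lt_0_compat; auto; apply pow_lt; lra).
    lra.
Qed.
Lemma ele_elt_trans x a b : ele x (Fin a) -> a < b -> elt x (Fin b).
Proof. intros [H|H] Hab; [destruct x; simpl in *; auto; lra|subst; simpl; auto]. Qed.

Lemma elt_ele_trans a b y : a < b -> ele (Fin b) y -> elt (Fin a) y.
Proof. intros Hab [H|H]; [destruct y; simpl in *; auto; lra|subst; simpl; auto]. Qed.

Lemma ele_neq_elt x y : ele x y -> x <> y -> elt x y.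
Proof. intros [H|H] Hn; tauto. Qed.

Lemma elt_ele_false x y : elt x y -> ele y x -> False.
Proof.
  intros H [H'|H']; [destruct x, y; simpl in *; auto; lra|subst; destruct x; simpl in *; auto; lra].
Qed.

Lemma esup_above (S : R -> Prop) a c : is_esup S a -> elt (Fin c) a -> exists x, S x /\ c < x.
Proof.
  intros [_ H2] Hc. apply NNPP. intro Hn. apply (elt_ele_false _ _ Hc). apply H2.
  intros x Sx. assert (h : x <= c) by (apply Rnot_lt_le; intro h; apply Hn; exists x; auto).
  destruct (Rle_lt_or_eq_dec _ _ h) as [h'|h']; [left; simpl; auto|right; subst; auto].
Qed.

Lemma einf_below (S : R -> Prop) b c : is_einf S b -> elt b (Fin c) -> exists x, S x /\ x < c.
Proof.
  intros [_ H2] Hc. apply NNPP. intro Hn. apply (elt_ele_false _ _ Hc). apply H2.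
  intros x Sx. assert (h : c <= x) by (apply Rnot_lt_le; intro h; apply Hn; exists x; auto).
  destruct (Rle_lt_or_eq_dec _ _ h) as [h'|h']; [left; simpl; auto|right; subst; auto].
Qed.

Lemma j_mono F z j : is_j F z j -> forall x y, x <= y -> j x <= j y.
Proof.
  intros Hj x y Hxy. destruct (Hj x) as [Hx1 Hx2]. destruct (Hj y) as [Hy1 Hy2].
  destruct (Rle_dec z x) as [zx|zx].
  - apply (meas_eq_mono _ _ _ _ (fun t (h : F t /\ z <= t <= x) => conj (proj1 h) (conj (proj1 (proj2 h)) (Rle_trans _ _ _ (proj2 (proj2 h)) Hxy)))
      (Hx1 zx) (Hy1 ltac:(lra))).
  - destruct (Rle_dec z y) as [zy|zy].
    + assert (0 <= - j x) by (apply (meas_eq_nonneg _ _ (Hx2 ltac:(lra)))).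
      assert (0 <= j y) by (apply (meas_eq_nonneg _ _ (Hy1 zy))). lra.
    + assert (- j y <= - j x); [|lra].
      apply (meas_eq_mono _ _ _ _ (fun t (h : F t /\ y <= t <= z) => conj (proj1 h) (conj (Rle_trans _ _ _ Hxy (proj1 (proj2 h))) (proj2 (proj2 h))))
      (Hy2 ltac:(lra)) (Hx2 ltac:(lra))).
Qed.

Lemma j_z F z j : is_j F z j -> j z = 0.
Proof.
  intros Hj. destruct (Hj z) as [H1 _]. specialize (H1 (Rle_refl z)).
  assert (0 <= j z) by (apply (meas_eq_nonneg _ _ H1)).
  apply Rle_antisym; auto. apply Rnot_lt_le. intro h.
  destruct H1 as [_ H1].
  assert (Ho : outer_le (fun t => F t /\ z <= t <= z) ((z + j z / 4) - (z - j z / 4))).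
  { apply outer_le_interval; [lra|]. intros t [_ Ht]. lra. }
  specialize (H1 _ Ho). lra.
Qed.
Lemma j_nonconst G z j : is_open G -> meas_pos (fun x => ~ G x) ->
  is_j (fun x => ~ G x) z j -> exists x, j x <> 0.
Proof.
  intros HG Hpos Hj. apply NNPP. intro Hn.
  assert (H0 : forall x, j x = 0).
  { intros x. apply NNPP. intro h. apply Hn. exists x. auto. }
  set (lo := fun n : nat => if Nat.even n then z else z - INR n).
  set (hi := fun n : nat => if Nat.even n then z + INR n else z).
  set (A := fun n t => ~ G t /\ lo n <= t <= hi n).
  apply Hpos. intros eps Heps.
  apply (outer_le_mono _ (fun x => exists n, A n x)).
  2:{ apply null_union; auto.
    - intros n. apply (compact_P4 (fun c => lo n <= c <= hi n)); [apply compact_P3| |].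
      + intros t Ht. unfold complementary, A in Ht.
        destruct (classic (G t)) as [Gt|Gt].
        * destruct (HG t Gt) as [e [He HGe]]. exists (mkposreal e He).
          intros y Hy. unfold disc in Hy; simpl in Hy. unfold complementary, A.
          intros [Hy' _]. apply Hy'. apply HGe. auto.
        * assert (Hout : t < lo n \/ hi n < t).
          { destruct (Rlt_dec t (lo n)); [auto|]. destruct (Rlt_dec (hi n) t); [auto|].
            exfalso. apply Ht. split; auto. lra. }
          destruct Hout as [Ho|Ho].
          -- assert (Hd : 0 < lo n - t) by lra. exists (mkposreal _ Hd).
             intros y Hy. unfold disc in Hy; simpl in Hy. apply Rabs_def2 in Hy.
             unfold complementary, A. intros [_ Hy']. lra.
          -- assert (Hd : 0 < t - hi n) by lra. exists (mkposreal _ Hd).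
             intros y Hy. unfold disc in Hy; simpl in Hy. apply Rabs_def2 in Hy.
             unfold complementary, A. intros [_ Hy']. lra.
      + intros t [_ Ht]. auto.
    - intros n e He. unfold A, lo, hi. destruct (Nat.even n).
      + destruct (Hj (z + INR n)) as [H1 _].
        assert (0 <= INR n) by apply pos_INR.
        destruct (H1 ltac:(lra)) as [H2 _]. rewrite H0 in H2.
        specialize (H2 e He). rewrite Rplus_0_l in H2.
        apply (outer_le_mono _ _ _ (fun t h => h) H2).
      + destruct (Rlt_dec (z - INR n) z) as [h|h].
        * destruct (Hj (z - INR n)) as [_ H1].
          destruct (H1 h) as [H2 _]. rewrite H0 in H2.
          specialize (H2 e He). replace (- 0 + e) with e in H2 by lra.
          apply (outer_le_mono _ _ _ (fun t h => h) H2).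
        * destruct (Hj z) as [H1 _].
          destruct (H1 (Rle_refl z)) as [H2 _]. rewrite H0 in H2.
          specialize (H2 e He). rewrite Rplus_0_l in H2.
          apply (outer_le_mono _ _ _ (fun t (q : ~ G t /\ z - INR n <= t <= z) => conj (proj1 q) (conj (Rle_trans _ _ _ (Rnot_lt_le _ _ h) (proj1 (proj2 q))) (proj2 (proj2 q)))) H2). }
  intros t Ft. destruct (nat_above (Rabs (t - z))) as [k Hk].
  assert (0 <= INR k) by apply pos_INR.
  destruct (Rle_dec z t) as [h|h].
  - exists (2 * k)%nat. unfold A, lo, hi. rewrite Nat.even_even. split; auto.
    rewrite mult_INR. simpl. rewrite Rabs_right in Hk by lra. lra.
  - exists (2 * k + 1)%nat. unfold A, lo, hi. rewrite Nat.even_odd. split; auto.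
    rewrite plus_INR, mult_INR. simpl. rewrite Rabs_left in Hk by lra. lra.
Qed.
Theorem mainTheorem12
  (G : R -> Prop) (z : R) (j : R -> R) (astar bstar : ereal)
  (HGopen : is_open G)
  (HGdense : forall a b, a < b -> meas_pos (fun x => G x /\ a < x /\ x < b))
  (HFpos : meas_pos (fun x => ~ G x))
  (HFperf : no_isolated_points (fun x => ~ G x))
  (HGinf : meas_infinite G)
  (HzF : ~ G z) (HzH : ~ endpoints G z)
  (Hj : is_j (fun x => ~ G x) z j)
  (Ha : is_esup (fun y => exists x, j x = y) astar)
  (Hb : is_einf (fun y => exists x, j x = y) bstar) :
  ((~ exists x, Fin (j x) = astar) <->
     (forall c, eint bstar astar c ->
        meas_infinite (fun x => eint (Fin c) astar (j x))))
  /\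
  ((~ exists x, Fin (j x) = bstar) <->
     (forall c, eint bstar astar c ->
        meas_infinite (fun x => eint bstar (Fin c) (j x)))).
Proof.
  assert (Hm := j_mono _ _ _ Hj).
  assert (Hz := j_z _ _ _ Hj).
  destruct (j_nonconst G z j HGopen HFpos Hj) as [x0 Hx0].
  set (wl := Rmin 0 (j x0)). set (wh := Rmax 0 (j x0)).
  assert (Hw : wl < wh).
  { unfold wl, wh, Rmin, Rmax. destruct (Rle_dec 0 (j x0)); lra. }
  assert (Hwl : exists x, j x = wl).
  { unfold wl, Rmin. destruct (Rle_dec 0 (j x0)); [exists z|exists x0]; auto. }
  assert (Hwh : exists x, j x = wh).
  { unfold wh, Rmax. destruct (Rle_dec 0 (j x0)); [exists x0|exists z]; auto. }
  destruct Hwl as [xl Hxl]. destruct Hwh as [xh Hxh].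
  split; split.
  - intros Hna c [Hc1 Hc2].
    destruct (esup_above _ _ _ Ha Hc2) as [y [[x1 e] Hy]]. subst y.
    apply (inf_right _ x1). intros x Hx. split.
    + simpl. assert (j x1 <= j x) by auto. lra.
    + apply ele_neq_elt; [apply (proj1 Ha); eauto|]. intro e; apply Hna; eauto.
  - intros H [x1 Hx1]. 
    assert (Hwh1 : wh <= j x1).
    { assert (h := proj1 Ha wh (ex_intro _ xh Hxh)). rewrite <- Hx1 in h.
      destruct h as [h|h]; [simpl in h; lra|injection h; lra]. }
    set (c := (wl + j x1) / 2).
    assert (Hc : eint bstar astar c).
    { split.
      - apply ele_elt_trans with wl; [apply (proj1 Hb); eauto|unfold c; lra].
      - rewrite <- Hx1. simpl. unfold c. lra. }
    apply (H c Hc). exists (x1 - xl).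
    apply outer_le_interval.
    + destruct (Rle_dec xl x1) as [h|h]; [lra|].
      assert (j x1 <= j xl) by (apply Hm; lra). lra.
    + intros x [h1 h2]. rewrite <- Hx1 in h2. simpl in h1, h2. split.
      * destruct (Rlt_dec xl x) as [h|h]; [auto|].
        assert (j x <= j xl) by (apply Hm; lra). unfold c in h1. lra.
      * destruct (Rlt_dec x x1) as [h|h]; [auto|].
        assert (j x1 <= j x) by (apply Hm; lra). lra.
  - intros Hna c [Hc1 Hc2].
    destruct (einf_below _ _ _ Hb Hc1) as [y [[x1 e] Hy]]. subst y.
    apply (inf_left _ x1). intros x Hx. split.
    + apply ele_neq_elt; [apply (proj1 Hb); eauto|]. intro e; apply Hna; eauto.
    + simpl. assert (j x <= j x1) by auto. lra.
  - intros H [x1 Hx1].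
    assert (Hwl1 : j x1 <= wl).
    { assert (h := proj1 Hb wl (ex_intro _ xl Hxl)). rewrite <- Hx1 in h.
      destruct h as [h|h]; [simpl in h; lra|injection h; lra]. }
    set (c := (j x1 + wh) / 2).
    assert (Hc : eint bstar astar c).
    { split.
      - rewrite <- Hx1. simpl. unfold c. lra.
      - apply elt_ele_trans with wh; [unfold c; lra|apply (proj1 Ha); eauto]. }
    apply (H c Hc). exists (xh - x1).
    apply outer_le_interval.
    + destruct (Rle_dec x1 xh) as [h|h]; [lra|].
      assert (j xh <= j x1) by (apply Hm; lra). lra.
    + intros x [h1 h2]. rewrite <- Hx1 in h1. simpl in h1, h2. split.
      * destruct (Rlt_dec x1 x) as [h|h]; [auto|].
        assert (j x <= j x1) by (apply Hm; lra). lra.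
      * destruct (Rlt_dec x xh) as [h|h]; [auto|].
        assert (j xh <= j x) by (apply Hm; lra). unfold c in h2. lra.
Qed.
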